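(* Assume that for all $i,j\in I$ the map $u\mapsto\lambda_{ij}(u)$ is continuous on $U$. Then for every bounded continuous function $w\colon\Delta_e\to\mathbb R$, the function $\rho\mapsto r(\rho,u)\int_{\Delta_e}w(p)\,R(\rho,u;dp)$ is continuous on $\Delta_e$ uniformly in $u\in U$; that is, for every $\rho\in\Delta_e$ and $\varepsilon>0$ there is $\delta>0$ such that $\sup_{u\in U}\bigl|r(\rho',u)\int_{\Delta_e}w\,dR(\rho',u;\cdot)-r(\rho,u)\int_{\Delta_e}w\,dR(\rho,u;\cdot)\bigr|<\varepsilon$ for all $\rho'\in\Delta_e$ with $|\rho'-\rho|<\delta$.
   Context: $I$, $O$ are finite sets and $h\colon I\to O$ is surjective and non-constant. $U$ is a compact metric space. For each $u\in U$, $\Lambda(u)=(\lambda_{ij}(u))_{i,j\in I}$ is a real matrix with $\lambda_{ij}(u)\ge0$ for $i\ne j$ and $\sum_j\lambda_{ij}(u)=0$. Measures on $I$ are row vectors in $\mathbb R^{|I|}$; for $a\in O$, $\Delta_a$ is the set of probability measures on $I$ supported in $h^{-1}(a)$, $\Delta_e=\bigcup_{a\in O}\Delta_a$ with the topology of $\mathbb R^{|I|}$, and $\mathbb 1_{h^{-1}(a)}$ is the column indicator vector of $h^{-1}(a)$. For $b\in O$ and a row vector $\mu$, $H_b[\mu]$ is the row vector with $H_b[\mu](i)=0$ for $i\notin h^{-1}(b)$, $H_b[\mu](i)=\mu(i)/(\mu\mathbb 1_{h^{-1}(b)})$ for $i\in h^{-1}(b)$ when $\mu\mathbb 1_{h^{-1}(b)}\ne0$,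 and $H_b[\mu]=\nu_b$ (a fixed arbitrary element of $\Delta_b$) when $\mu\mathbb 1_{h^{-1}(b)}=0$. For $\rho\in\Delta_a$ and $u\in U$: $r(\rho,u)=-\rho\Lambda(u)\mathbb 1_{h^{-1}(a)}$ and $R(\rho,u;D)=\sum_{b\in O}\mathbb 1_D(H_b[\rho\Lambda(u)])\,q(\rho,u,b)$ for Borel $D\subseteq\Delta_e$, where $q(\rho,u,b)=\frac{\rho\Lambda(u)\mathbb 1_{h^{-1}(b)}}{-\rho\Lambda(u)\mathbb 1_{h^{-1}(a)}}\mathbb 1_{b\ne a}$ if $\rho\Lambda(u)\mathbb 1_{h^{-1}(a)}\ne0$ and $q(\rho,u,b)=q_a(b)$ otherwise, with $q_a$ a fixed arbitrary probability on $O\setminus\{a\}$. *)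

(* Defs.v *)
From HB Require Import structures.
From mathcomp Require Import all_boot all_order all_algebra.
From mathcomp Require Import all_classical all_reals all_analysis.
Set Implicit Arguments. Unset Strict Implicit. Unset Printing Implicit Defensive.
Import Order.TTheory GRing.Theory Num.Theory.
Local Open Scope ring_scope.

Section Defs.
Variables (R : realType) (I O : finType) (h : I -> O).

(* Measures on I are row vectors, represented as functions I -> R. *)
(* sup-norm distance on R^|I| (all norms are equivalent on R^|I|) *)
Definition vdist (x y : I -> R) : R := \big[Num.max/0]_(i : I) `|x i - y i|.

Definition Delta (a : O) (rho : I -> R) : Prop :=
  [/\ forall i, 0 <= rho i, forall i, h i != a -> rho i = 0 & \sum_i rho i = 1].

Definition Delta_e (rho : I -> R) : Prop := exists a, Delta a rho.

Definition vmul (mu : I -> R) (L : I -> I -> R) : I -> R :=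
  fun j => \sum_i mu i * L i j.

Definition mass (mu : I -> R) (b : O) : R := \sum_(i | h i == b) mu i.

Definition Hb (nu : O -> I -> R) (b : O) (mu : I -> R) : I -> R :=
  if mass mu b != 0 then (fun i => if h i == b then mu i / mass mu b else 0)
  else nu b.

Definition rate (a : O) (rho : I -> R) (L : I -> I -> R) : R :=
  - mass (vmul rho L) a.

Definition qjump (qa : O -> O -> R) (a : O) (rho : I -> R) (L : I -> I -> R)
    (b : O) : R :=
  if mass (vmul rho L) a != 0 then
    (if b != a then mass (vmul rho L) b / (- mass (vmul rho L) a) else 0)
  else qa a b.

Definition Rker (nu : O -> I -> R) (qa : O -> O -> R) (a : O) (rho : I -> R)
    (L : I -> I -> R) (D : set (I -> R)) : R :=
  \sum_(b : O) (if `[< D (Hb nu b (vmul rho L)) >] then 1 else 0)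
               * qjump qa a rho L b.

(* Integral of w against the (finitely atomic) measure R(rho,u;.):
   int w dR(rho,u;.) = sum_b w(H_b[rho Lambda(u)]) q(rho,u,b). *)
Definition Rkint (nu : O -> I -> R) (qa : O -> O -> R) (a : O) (rho : I -> R)
    (L : I -> I -> R) (w : (I -> R) -> R) : R :=
  \sum_(b : O) w (Hb nu b (vmul rho L)) * qjump qa a rho L b.

Definition bounded_on_De (w : (I -> R) -> R) : Prop :=
  exists M : R, forall rho, Delta_e rho -> `|w rho| <= M.

Definition continuous_on_De (w : (I -> R) -> R) : Prop :=
  forall rho, Delta_e rho -> forall eps : R, 0 < eps ->
    exists2 delta : R, 0 < delta &
      forall rho', Delta_e rho' -> vdist rho' rho < delta ->
        `|w rho' - w rho| < eps.

End Defs.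

(* Main.v *)
Require Import Defs.
From HB Require Import structures.
From mathcomp Require Import all_boot all_order all_algebra.
From mathcomp Require Import all_classical all_reals all_analysis.
From mathcomp Require Import ring lra.
Import Order.TTheory GRing.Theory Num.Theory.
Import numFieldNormedType.Exports.
Local Open Scope ring_scope.

Section Alg.
Variables (R : realType) (I O : finType) (h : I -> O).
Variable (L : I -> I -> R).
Hypothesis Loff : forall i j, i != j -> 0 <= L i j.
Hypothesis Lrows : forall i, \sum_j L i j = 0.

Lemma vmul_ge0 {a r j} : Delta h a r -> h j != a -> 0 <= vmul r L j.
Proof.
move=> [r0 rz _] hj; rewrite /vmul; apply: sumr_ge0 => k _.
have [hk|hk] := eqVneq (h k) a.
  apply: mulr_ge0 => //; apply: Loff; apply: contraNneq hj => <-; by rewrite hk.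
by rewrite rz // mul0r.
Qed.

Lemma mass_ge0 {a b r} : Delta h a r -> b != a -> 0 <= mass h (vmul r L) b.
Proof.
move=> Dr ba; apply: sumr_ge0 => j /eqP hj; apply: (vmul_ge0 Dr); by rewrite hj.
Qed.

Lemma mass_tot r : \sum_b mass h (vmul r L) b = 0.
Proof.
have -> : \sum_b mass h (vmul r L) b = \sum_i vmul r L i.
  by rewrite (partition_big h xpredT) //=.
rewrite /vmul exchange_big /=.
by apply: big1 => i _; rewrite -mulr_sumr Lrows mulr0.
Qed.

Lemma Hb_Delta nu a b r : (forall b, Delta h b (nu b)) -> Delta h a r -> b != a ->
  Delta h b (Hb h nu b (vmul r L)).
Proof.
move=> nuin Dr ba; rewrite /Hb; case: ifPn => // m0.
have mpos : 0 < mass h (vmul r L) b by rewrite lt_def m0 (mass_ge0 Dr ba).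
split.
- move=> i; case: ifPn => // /eqP hi; apply: divr_ge0; last exact: ltW.
  by apply: (vmul_ge0 Dr); rewrite hi.
- by move=> i /negPf ->.
- rewrite -big_mkcond /= -mulr_suml -/(mass h (vmul r L) b) mulfV //.
Qed.

Lemma prod_formula nu qa w a r : Delta h a r ->
  rate h a r L * Rkint h nu qa a r L w =
  \sum_(b | b != a) w (Hb h nu b (vmul r L)) * mass h (vmul r L) b.
Proof.
move=> Dr; rewrite /rate /Rkint /qjump.
set m := mass h (vmul r L).
have [ma0|ma0] := eqVneq (m a) 0.
  rewrite ma0 oppr0 mul0r; symmetry; apply: big1 => b ba.
  have := mass_tot r; rewrite (bigD1 a) //= -/m ma0 add0r => S.
  by rewrite (psumr_eq0P _ S) ?mulr0 // => c ca; apply: (mass_ge0 Dr).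
rewrite mulr_sumr [RHS]big_mkcond /=; apply: eq_bigr => b _.
case: ifPn => ba; last by rewrite !mulr0.
by field.
Qed.

Lemma vdist_ge (x y : I -> R) i : `|x i - y i| <= vdist x y.
Proof.
rewrite /vdist (bigD1 i) //=; by rewrite le_max lexx.
Qed.

Lemma vdist_lt (x y : I -> R) d : 0 < d -> (forall i, `|x i - y i| < d) -> vdist x y < d.
Proof.
move=> d0 H; rewrite /vdist; elim/big_ind: _ => //.
by move=> p q Hp Hq; rewrite gt_max Hp Hq.
Qed.

Lemma vdist_ge0 (x y : I -> R) : 0 <= vdist x y.
Proof. rewrite /vdist; elim/big_ind: _ => // p q Hp Hq; rewrite le_max Hp //. Qed.

End Alg.
Arguments vdist_ge {R I} x y i.
Arguments vdist_lt {R I} x y d.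
Arguments vdist_ge0 {R I} x y.
Local Open Scope classical_set_scope.

Definition Fr {R : realType} {I O : finType} (h : I -> O) (a : O) (rho : I -> R)
  : set_system (I -> R) :=
  filter_from (fun d : R => 0 < d)
    (fun d => [set r' : I -> R | Delta h a r' /\ vdist r' rho < d]).

Lemma Fr_filter {R : realType} {I O : finType} (h : I -> O) a (rho : I -> R) :
  Filter (Fr h a rho).
Proof.
apply: filter_from_filter; first by exists 1.
move=> i j i0 j0; exists (Num.min i j); first by rewrite lt_min i0 j0.
by move=> r' [D hd]; move: hd; rewrite lt_min => /andP[? ?].
Qed.

Lemma Fr_rho {R : realType} {I O : finType} (h : I -> O) a (rho : I -> R) B :
  Delta h a rho -> Fr h a rho B -> B rho.
Proof.
move=> Dr [d d0 sub]; apply: sub; split => //; apply: vdist_lt => // i.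
by rewrite subrr normr0.
Qed.

Section Ana.
Variables (R : realType) (I O : finType) (h : I -> O).
Variables (U : pseudoMetricType R) (Lambda : U -> I -> I -> R).
Hypothesis Loff : forall u i j, i != j -> 0 <= Lambda u i j.
Hypothesis Lrows : forall u i, \sum_j Lambda u i j = 0.
Hypothesis Lcont : forall i j : I, continuous (fun u : U => Lambda u i j).
Variables (nu : O -> I -> R) (w : (I -> R) -> R).
Hypothesis nu_in : forall b, Delta h b (nu b).
Hypothesis w_bnd : bounded_on_De h w.
Hypothesis w_cont : continuous_on_De h w.
Variables (a : O) (rho : I -> R).
Hypothesis Drho : Delta h a rho.
Section Local.
Variable u0 : U.

Let X := filter_prod (nbhs u0) (Fr h a rho).
Let FrF := Fr_filter h a rho.
#[local] Instance XF : Filter X := filter_prod_filter (nbhs_filter u0) FrF.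

Let mu (p : U * (I -> R)) := vmul p.2 (Lambda p.1).
Let m b (p : U * (I -> R)) := mass h (mu p) b.
Definition Gb b (p : U * (I -> R)) := w (Hb h nu b (mu p)) * m b p.

Lemma Xdelta : \forall p \near X, Delta h a p.2.
Proof.
rewrite /X /filter_prod; exists (setT, [set r' | Delta h a r' /\ vdist r' rho < 1]) => /=.
  by split; [exact: filterT | exists 1].
by move=> [u r'] [_ [? _]].
Qed.

Lemma cv_rho i : (fun p : U * (I -> R) => p.2 i) @ X --> rho i.
Proof.
apply/cvgrPdist_lt => e e0.
rewrite /X /filter_prod; exists (setT, [set r' | Delta h a r' /\ vdist r' rho < e]) => /=.
  by split; [exact: filterT | exists e].
move=> [u r'] [_ [_ hd]] /=; rewrite distrC.
  exact: le_lt_trans (vdist_ge r' rho i) hd.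
Qed.

Lemma cv_L i j : (fun p : U * (I -> R) => Lambda p.1 i j) @ X --> Lambda u0 i j.
Proof.
apply: (cvg_comp fst (fun u => Lambda u i j)); first exact: cvg_fst.
exact: Lcont.
Qed.

Lemma cv_mu j : (fun p => mu p j) @ X --> vmul rho (Lambda u0) j.
Proof.
rewrite /mu /vmul.
apply: (@cvg_big _ _ +%R 0 xpredT add_continuous _ X _
   (fun i p => p.2 i * Lambda p.1 i j) (fun i => rho i * Lambda u0 i j)) => // i _.
exact: (@cvgM _ _ _ _ (fun p => p.2 i) (fun p => Lambda p.1 i j) _ _ (cv_rho i) (cv_L i j)).
Qed.

Lemma cv_m b : m b @ X --> mass h (vmul rho (Lambda u0)) b.
Proof.
rewrite /m /mass.
apply: (@cvg_big _ _ +%R 0 (fun i => h i == b) add_continuous _ X _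
   (fun i p => mu p i) (fun i => vmul rho (Lambda u0) i)) => // i _; exact: cv_mu.
Qed.


Lemma cv_G b : b != a -> Gb b @ X --> Gb b (u0, rho).
Proof.
move=> ba.
set m0 := mass h (vmul rho (Lambda u0)) b.
have [M HM] := w_bnd.
have HDe : forall p, Delta h a p.2 -> Delta_e h (Hb h nu b (mu p)).
  move=> p Dp; exists b.
  exact: (Hb_Delta _ _ _ h (Lambda p.1) (Loff p.1) nu a b p.2 nu_in Dp ba).
have [m00|m0n] := eqVneq m0 0.
  have -> : Gb b (u0, rho) = 0 by rewrite /Gb; rewrite [m b _]m00 mulr0.
  apply/cvgrPdist_lt => e e0.
  set M' := `|M| + 1.
  have M'0 : 0 < M' by rewrite /M'; apply: ltr_wpDl.
  near=> p.
  have Dp : Delta h a p.2 by near: p; exact: Xdelta.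
  have Hm : `|m0 - m b p| < e / M'.
    by near: p; apply: cvgr_dist_lt; [exact: cv_m | exact: divr_gt0].
  rewrite m00 sub0r normrN in Hm.
  rewrite sub0r normrN /Gb normrM.
  have Hw : `|w (Hb h nu b (mu p))| <= M'.
    apply: le_trans (HM _ (HDe p Dp)) _; rewrite /M'.
    apply: le_trans (ler_norm M) _; lra.
  apply: (le_lt_trans (y := M' * `|m b p|)); first by apply: ler_wpM2r.
  have := Hm; rewrite -(ltr_pM2r M'0) divfK ?gt_eqF // mulrC; exact.
have Hwc : (fun p => w (Hb h nu b (mu p))) @ X --> w (Hb h nu b (mu (u0, rho))).
  apply/cvgrPdist_lt => e e0.
  set H0 := Hb h nu b (mu (u0, rho)).
  have DH0 : Delta_e h H0 := HDe (u0, rho) Drho.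
  have [d d0 Hd] := w_cont _ DH0 _ e0.
  have EH0 : H0 = fun i => if h i == b then vmul rho (Lambda u0) i / m0 else 0.
    have mm : mass h (mu (u0, rho)) b != 0 := m0n.
    by rewrite /H0 /Hb mm.
  have cvc : forall i, (fun p => if h i == b then mu p i / m b p else 0) @ X -->
      (if h i == b then vmul rho (Lambda u0) i / m0 else 0).
    move=> i; case: (h i == b); last exact: cvg_cst.
    exact: (@cvgM _ _ _ _ (fun p => mu p i) (fun p => (m b p)^-1) _ _ (cv_mu i)
              (cvgV m0n (cv_m b))).
  near=> p.
  have Dp : Delta h a p.2 by near: p; exact: Xdelta.
  have Hmp : `|m0 - m b p| < `|m0|.
    by near: p; apply: cvgr_dist_lt; [exact: cv_m | rewrite normr_gt0].
  have mp0 : mass h (mu p) b != 0.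
    by apply: contraTneq Hmp => mz; rewrite [m b p]mz subr0 ltxx.
  have Hc : forall i, `|(if h i == b then vmul rho (Lambda u0) i / m0 else 0) -
                 (if h i == b then mu p i / m b p else 0)| < d.
    by near: p; apply: filter_forall => i; apply: cvgr_dist_lt => //; exact: cvc.
  have EHp : Hb h nu b (mu p) = fun i => if h i == b then mu p i / m b p else 0.
    by rewrite /Hb mp0.
  rewrite distrC; apply: (Hd _ (HDe p Dp)).
  rewrite EHp EH0; apply: vdist_lt => // i; rewrite distrC; exact: Hc.
exact: (@cvgM _ _ _ _ (fun p => w (Hb h nu b (mu p))) (m b) _ _ Hwc (cv_m b)).
Unshelve. all: by end_near.
Qed.

Definition Phi (p : U * (I -> R)) := \sum_(b | b != a) Gb b p.

Lemma cv_Phi : Phi @ X --> Phi (u0, rho).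
Proof.
apply: (@cvg_big _ _ +%R 0 (fun b => b != a) add_continuous _ X _ Gb
  (fun b => Gb b (u0, rho))) => // b ba; exact: cv_G.
Qed.

Lemma local_cov e : 0 < e ->
  \forall u \near u0 & r' \near Fr h a rho, `|Phi (u, r') - Phi (u, rho)| <= e.
Proof.
move=> e0.
have := cvgr_dist_lt _ _ cv_Phi (e / 2) ltac:(by rewrite divr_gt0).
rewrite /X => -[[A B] /= [nA FB] sub].
exists (A, B) => //= -[u r'] /= [Au Br'].
have B0 := Fr_rho h a rho B Drho FB.
have h1 := sub (u, r') (conj Au Br').
have h2 := sub (u, rho) (conj Au B0).
move: h1 h2 => /= h1 h2.
have T : Phi (u, r') - Phi (u, rho) =
  (Phi (u0, rho) - Phi (u, rho)) - (Phi (u0, rho) - Phi (u, r')) by ring.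
rewrite T; apply: le_trans (ler_normB _ _) _; lra.
Qed.

End Local.

Lemma unif e : 0 < e -> compact [set: U] ->
  exists2 d, 0 < d & forall r', Delta h a r' -> vdist r' rho < d ->
    forall u, `|Phi (u, r') - Phi (u, rho)| <= e.
Proof.
move=> e0 cU.
have := (compact_near_coveringP [set: U]).1 cU (I -> R) (Fr h a rho)
  (fun r' u => `|Phi (u, r') - Phi (u, rho)| <= e) (Fr_filter h a rho)
  (fun u0 _ => local_cov u0 e e0).
move=> [d d0 sub]; exists d => // r' Dr' hd u.
exact: (sub r' (conj Dr' hd) u Logic.I).
Qed.

End Ana.

Theorem mainTheorem5 (R : realType) (I O : finType) (h : I -> O)
  (h_surj : forall b : O, exists i : I, h i = b)
  (h_nonconst : exists i j : I, h i != h j)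
  (U : pseudoMetricType R) (U_hausdorff : hausdorff_space U)
  (U_compact : compact [set: U])
  (Lambda : U -> I -> I -> R)
  (Lambda_offdiag : forall u i j, i != j -> 0 <= Lambda u i j)
  (Lambda_rows : forall u i, \sum_j Lambda u i j = 0)
  (nu : O -> I -> R) (nu_in : forall b, Delta h b (nu b))
  (qa : O -> O -> R)
  (qa_ge0 : forall a b, 0 <= qa a b) (qa_diag : forall a, qa a a = 0)
  (qa_sum : forall a, \sum_b qa a b = 1)
  (Lambda_cont : forall i j : I, continuous (fun u : U => Lambda u i j))
  (w : (I -> R) -> R)
  (w_bnd : bounded_on_De h w) (w_cont : continuous_on_De h w) :
  forall (a : O) (rho : I -> R), Delta h a rho ->
  forall eps : R, 0 < eps ->
  exists2 delta : R, 0 < delta &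
    forall (a' : O) (rho' : I -> R), Delta h a' rho' -> vdist rho' rho < delta ->
      exists2 s : R, s < eps &
        forall u : U,
          `| rate h a' rho' (Lambda u) * Rkint h nu qa a' rho' (Lambda u) w
             - rate h a rho (Lambda u) * Rkint h nu qa a rho (Lambda u) w | <= s.
Proof.
move=> a rho Drho eps eps0.
have e0 : 0 < eps / 2 by rewrite divr_gt0.
have [d d0 Hd] := unif _ _ _ h _ _ Lambda_offdiag Lambda_cont nu w nu_in w_bnd w_cont a rho Drho _ e0 U_compact.
have [i0 _] := h_nonconst.
set N := (#|I|)%:R : R.
have N0 : 0 < N by rewrite /N ltr0n; apply/card_gt0P; exists i0.
exists (Num.min d N^-1); first by rewrite lt_min d0 invr_gt0 N0.
move=> a' rho' Drho' hd.
move: hd; rewrite lt_min => /andP[hd hN].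
have aa : a' = a.
  apply/eqP; apply: contraTT hN => na; rewrite -leNgt.
  have [r0 rz rs] := Drho.
  have [r0' rz' _] := Drho'.
  have : 1 <= N * vdist rho' rho.
    rewrite -rs /N mulr_natl -sumr_const; apply: ler_sum => i _.
    have [hi|hi] := eqVneq (h i) a.
      rewrite -[rho i]subr0 -(rz' i); last by rewrite hi eq_sym.
      apply: le_trans _ (vdist_ge rho' rho i); rewrite distrC; exact: ler_norm.
    by rewrite rz //; apply: vdist_ge0.
  by move=> H; rewrite -(ler_pM2l N0) mulfV ?gt_eqF.
subst a'.
exists (eps / 2); first lra.
move=> u.
rewrite !(prod_formula _ _ _ h (Lambda u) (Lambda_offdiag u) (Lambda_rows u)) //.
exact: Hd.
Qed.
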